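(* Let $I$ be a conditional indicator w.r.t. $\mathcal{H}$ whose domain $\mathbb{D}_I$ is $\mathcal{H}$-decomposable. The following are equivalent: (1) $I$ is regular; (2) $I(X1_H)=I(X)1_H$ for all $X\in\mathbb{D}_I$ and $H\in\mathcal{H}$; (3) $I(X1_H+Y1_{\Omega\setminus H})=I(X)1_H+I(Y)1_{\Omega\setminus H}$ for all $X,Y\in\mathbb{D}_I$ and $H\in\mathcal{H}$.
   Context: Let $(\Omega,\mathcal{F},\mathbb{P})$ be a probability space with $\mathcal{F}$ complete, and $\mathcal{H}\subseteq\mathcal{F}$ a complete sub-$\sigma$-algebra. $\overline{\mathbb{R}}=\mathbb{R}\cup\{\pm\infty\}$ with conventions $r\pm\infty=\pm\infty$, $\infty-\infty=0$, $\infty+\infty=\infty$, $0\times(\pm\infty)=0$; $\mathbb{L}^0(G,\mathcal{G})$ is the set of $\mathcal{G}$-measurable random variables a.s. valued in $G$. $\operatorname{ess\,sup}_{\mathcal{H}}(X)$ is the smallest $\mathcal{H}$-measurable random variable dominating $X$ a.s., $\operatorname{ess\,inf}_{\mathcal{H}}(X)=-\operatorname{ess\,sup}_{\mathcal{H}}(-X)$. A conditional indicator w.r.t. $\mathcal{H}$ is a map $I:\mathbb{D}_I\to\mathbb{L}^0(\overline{\mathbb{R}},\mathcal{H})$, $0\in\mathbb{D}_I\subseteq\mathbb{L}^0(\overline{\mathbb{R}},\mathcal{F})$, with $I(X)\in[\operatorname{ess\,inf}_{\mathcal{H}}(X),\operatorname{ess\,sup}_{\mathcal{H}}(X)]$ a.s.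 and $\mathbb{D}_I+\mathbb{L}^0(\overline{\mathbb{R}},\mathcal{H})\subseteq\mathbb{D}_I$. $\mathbb{D}_I$ is $\mathcal{H}$-decomposable if $X1_H+Y1_{\Omega\setminus H}\in\mathbb{D}_I$ for $X,Y\in\mathbb{D}_I$, $H\in\mathcal{H}$. $I$ is regular if $\mathbb{D}_I$ is $\mathcal{H}$-decomposable and for $X,Y\in\mathbb{D}_I$, $H\in\mathcal{H}$, $X1_H=Y1_H$ implies $I(X)1_H=I(Y)1_H$. *)

(* Defs.v *)
From HB Require Import structures.
From mathcomp Require Import all_boot all_order all_algebra.
From mathcomp Require Import all_classical all_reals all_analysis measurable_realfun.
Unset Printing Implicit Defensive.
Import Order.TTheory GRing.Theory Num.Theory.
Local Open Scope classical_set_scope.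
Local Open Scope ring_scope.

Section CondIndicator.
Context {d : measure_display} {T : measurableType d} {R : realType}.
Variable P : probability T R.
Local Open Scope ereal_scope.

(* Addition on the extended reals with the paper's conventions:
   r +- oo = +-oo, oo - oo = 0, oo + oo = oo. *)
Definition eaddp (x y : \bar R) : \bar R :=
  match x, y with
  | +oo, -oo => 0
  | -oo, +oo => 0
  | _, _ => x + y
  end.

Definition P_complete := forall N : set T, P.-negligible N -> measurable N.

Definition complete_sub_sigma (Hs : set (set T)) :=
  [/\ sigma_algebra setT Hs, Hs `<=` measurable &
      forall N : set T, P.-negligible N -> Hs N].

Definition Hmeas (Hs : set (set T)) (X : T -> \bar R) :=
  forall B : set (\bar R), measurable B -> Hs (X @^-1` B).

Definition aeeq (X Y : T -> \bar R) := {ae P, forall w, X w = Y w}.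
Definition aele (X Y : T -> \bar R) := {ae P, forall w, X w <= Y w}.

Definition is_cesssup (Hs : set (set T)) (X S : T -> \bar R) :=
  [/\ Hmeas Hs S, aele X S &
      forall Z, Hmeas Hs Z -> aele X Z -> aele S Z].

Definition is_cessinf (Hs : set (set T)) (X S : T -> \bar R) :=
  is_cesssup Hs (fun w => - X w) (fun w => - S w).

Definition indm (X : T -> \bar R) (H : set T) : T -> \bar R :=
  fun w => X w * (\1_H w : R)%:E.

Definition hpatch (X Y : T -> \bar R) (H : set T) : T -> \bar R :=
  fun w => eaddp (X w * (\1_H w : R)%:E) (Y w * (\1_(~` H) w : R)%:E).

(* Random variables are modelled as functions; since L^0 consists of
   a.s.-classes, D is required to be saturated for a.s. equality and I to
   be compatible with a.s. equality. *)
Definition cond_indicator (Hs : set (set T)) (D : set (T -> \bar R))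
    (I : (T -> \bar R) -> (T -> \bar R)) :=
  [/\ D (fun=> 0),
      (forall X, D X -> measurable_fun setT X),
      (forall X Y, D X -> aeeq X Y -> D Y),
      (forall X Y, D X -> D Y -> aeeq X Y -> aeeq (I X) (I Y)) &
      [/\ (forall X, D X -> Hmeas Hs (I X)),
          (forall X S, D X -> is_cessinf Hs X S -> aele S (I X)),
          (forall X S, D X -> is_cesssup Hs X S -> aele (I X) S) &
          (forall X Z, D X -> Hmeas Hs Z -> D (fun w => eaddp (X w) (Z w)))]].

Definition decomposable (Hs : set (set T)) (D : set (T -> \bar R)) :=
  forall X Y H, D X -> D Y -> Hs H -> D (hpatch X Y H).

Definition regular (Hs : set (set T)) (D : set (T -> \bar R))
    (I : (T -> \bar R) -> (T -> \bar R)) :=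
  decomposable Hs D /\
  forall X Y H, D X -> D Y -> Hs H ->
    aeeq (indm X H) (indm Y H) -> aeeq (indm (I X) H) (indm (I Y) H).

End CondIndicator.

(* Main.v *)
Require Import Defs.
From HB Require Import structures.
From mathcomp Require Import all_boot all_order all_algebra.
From mathcomp Require Import all_classical all_reals all_analysis measurable_realfun.
Local Open Scope classical_set_scope.
Import Order.TTheory GRing.Theory Num.Theory.
Local Open Scope ring_scope.

Section Aux.
Context {d : measure_display} {T : measurableType d} {R : realType}.
Local Open Scope ereal_scope.

Lemma indmT (X : T -> \bar R) H w : H w -> indm X H w = X w.
Proof. by move=> Hw; rewrite /indm indicE mem_set // mule1. Qed.

Lemma indmF (X : T -> \bar R) H w : ~ H w -> indm X H w = 0.
Proof. by move=> Hw; rewrite /indm indicE memNset // mule0. Qed.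

Lemma hpatchT (X Y : T -> \bar R) H w : H w -> hpatch X Y H w = X w.
Proof.
move=> Hw; rewrite /hpatch !indicE mem_set // memNset; last by [].
by rewrite mule1 mule0; case: (X w) => [r| |] //=; rewrite adde0.
Qed.

Lemma hpatchF (X Y : T -> \bar R) H w : ~ H w -> hpatch X Y H w = Y w.
Proof.
move=> Hw; rewrite /hpatch !indicE memNset // mem_set; last by [].
by rewrite mule1 mule0; case: (Y w) => [r| |] //=; rewrite add0e.
Qed.

Lemma indm_hpatch (X : T -> \bar R) H : indm X H = hpatch X (fun=> 0) H.
Proof.
apply/funext => w; case: (pselect (H w)) => Hw.
  by rewrite indmT // hpatchT.
by rewrite indmF // hpatchF.
Qed.

Lemma indm_hpatchL (X Y : T -> \bar R) H : indm (hpatch X Y H) H = indm X H.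
Proof.
apply/funext => w; case: (pselect (H w)) => Hw.
  by rewrite !indmT // hpatchT.
by rewrite !indmF.
Qed.

Lemma indm_hpatchR (X Y : T -> \bar R) H : indm (hpatch X Y H) (~` H) = indm Y (~` H).
Proof.
apply/funext => w; case: (pselect (H w)) => Hw.
  by rewrite !indmF //.
by rewrite !indmT // hpatchF.
Qed.

Lemma indm_indm (X : T -> \bar R) H : indm (indm X H) H = indm X H.
Proof.
apply/funext => w; case: (pselect (H w)) => Hw.
  by rewrite !indmT.
by rewrite !indmF.
Qed.

Lemma indm_indmC (X : T -> \bar R) H : indm (indm X H) (~` H) = fun=> 0.
Proof.
apply/funext => w; case: (pselect (H w)) => Hw.
  by rewrite indmF.
by rewrite indmT // indmF.
Qed.

Lemma ae_and (P : probability T R) (A B : T -> Prop) :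
  {ae P, forall w, A w} -> {ae P, forall w, B w} ->
  {ae P, forall w, A w /\ B w}.
Proof. by move=> a b; apply: filterS2 a b. Qed.

End Aux.

Theorem mainTheorem15 (d : measure_display) (T : measurableType d)
  (R : realType) (P : probability T R) (Hs : set (set T))
  (D : set (T -> \bar R)) (I : (T -> \bar R) -> (T -> \bar R)) :
  P_complete P -> complete_sub_sigma P Hs ->
  cond_indicator P Hs D I -> decomposable Hs D ->
  (regular P Hs D I <->
     (forall X H, D X -> Hs H -> aeeq P (I (indm X H)) (indm (I X) H))) /\
  ((forall X H, D X -> Hs H -> aeeq P (I (indm X H)) (indm (I X) H)) <->
     (forall X Y H, D X -> D Y -> Hs H ->
        aeeq P (I (hpatch X Y H)) (hpatch (I X) (I Y) H))).
Proof.
move=> _ [[Hs0 HsC _] _ _] [D0 _ Dsat Icomp [Ihm Iinf Isup Dadd]] Ddec.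
have HsT : Hs setT by have := HsC _ Hs0; rewrite setD0.
have HsN : forall H, Hs H -> Hs (~` H) by move=> H /HsC; rewrite setTD.
have Dind : forall X H, D X -> Hs H -> D (indm X H).
  by move=> X H DX HH; rewrite indm_hpatch; apply: Ddec.
have hm0 : Hmeas Hs (fun=> (0 : \bar R)%E).
  by move=> B mB; rewrite (preimage_cst (0 : \bar R)%E B); case: ifP.
have sup0 : is_cesssup P Hs (fun=> (0 : \bar R)%E) (fun=> (0 : \bar R)%E).
  split; [by [] | by apply: aeW => w /= | by move=> Z _ h].
have I0 : aeeq P (I (fun=> (0 : \bar R)%E)) (fun=> (0 : \bar R)%E).
  have h1 := Isup _ _ D0 sup0.
  have h2 : aele P (fun=> (0 : \bar R)%E) (I (fun=> (0 : \bar R)%E)).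
    apply: Iinf => //; rewrite /is_cessinf.
    have -> : (fun w : T => (- (fun=> (0 : \bar R)%E) w)%E) = fun=> (0 : \bar R)%E.
      by apply/funext => w /=; congr EFin; apply: oppr0.
    exact: sup0.
  apply: filterS2 h1 h2 => w /= a b; exact/le_anti/andP.
split; split.
- move=> [_ Hreg] X H DX HH.
  have DXH := Dind X H DX HH.
  have e1 : aeeq P (indm (I (indm X H)) H) (indm (I X) H).
    by apply: Hreg => //; rewrite indm_indm; apply: aeW.
  have e2 : aeeq P (indm (I (indm X H)) (~` H))
                   (indm (I (fun=> (0 : \bar R)%E)) (~` H)).
    apply: Hreg => //; first exact: HsN.
    by rewrite indm_indmC; apply: aeW => w; rewrite /indm mul0e.
  apply: filterS3 e1 e2 I0 => w a b c.
  case: (pselect (H w)) => Hw.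
    by rewrite -a indmT.
  by rewrite indmF // -(indmT (I (indm X H)) (~` H) w Hw) b indmT // c.
- move=> h2; split => // X Y H DX DY HH e.
  have := Icomp _ _ (Dind X H DX HH) (Dind Y H DY HH) e.
  move=> e'; apply: filterS3 e' (h2 X H DX HH) (h2 Y H DY HH) => w a b c.
  by rewrite -b -c.
- move=> h2 X Y H DX DY HH.
  have DZ := Ddec X Y H DX DY HH.
  have a := h2 _ H DZ HH; rewrite indm_hpatchL in a.
  have b := h2 X H DX HH.
  have c := h2 _ (~` H) DZ (HsN _ HH); rewrite indm_hpatchR in c.
  have e := h2 Y (~` H) DY (HsN _ HH).
  have ab := ae_and P _ _ a b.
  have ce := ae_and P _ _ c e.
  apply: filterS2 ab ce => w [a1 b1] [c1 e1].
  case: (pselect (H w)) => Hw.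
    rewrite hpatchT // -(indmT (I (hpatch X Y H)) H w Hw) -a1 b1.
    by rewrite indmT.
  rewrite hpatchF // -(indmT (I (hpatch X Y H)) (~` H) w Hw) -c1 e1.
  by rewrite indmT.
- move=> h3 X H DX HH.
  have := h3 X (fun=> (0 : \bar R)%E) H DX D0 HH; rewrite -indm_hpatch => a.
  apply: filterS2 a I0 => w a b; rewrite a.
  case: (pselect (H w)) => Hw.
    by rewrite hpatchT // indmT.
  by rewrite hpatchF // indmF.
Qed.
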